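(* Let $R$ be a commutative noetherian ring. The class $\mathcal{Z}$ of $R$-modules is a Serre subcategory of the category of $R$-modules: it is closed under submodules, quotient modules and extensions (i.e. if $0\to M'\to M\to M''\to 0$ is exact with $M',M''\in\mathcal{Z}$ then $M\in\mathcal{Z}$).
   Context: An $R$-module $M$ belongs to the class $\mathcal{Z}$ if for every descending chain $N_1\supseteq N_2\supseteq N_3\supseteq\cdots$ of submodules of $M$ there is $n$ such that $\operatorname{Supp}_R(N_i/N_{i+1})\subseteq\operatorname{Max}R$ for all $i\ge n$. ($\operatorname{Max}R$ is the set of maximal ideals of $R$.) *)

(* Defs.v *)
From HB Require Import structures.
From mathcomp Require Import all_boot all_order all_algebra.
Set Implicit Arguments. Unset Strict Implicit. Unset Printing Implicit Defensive.
Import GRing.Theory.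
Local Open Scope ring_scope.

Definition is_ideal (R : comPzRingType) (I : R -> Prop) : Prop :=
  I 0 /\ (forall x y, I x -> I y -> I (x + y)) /\ (forall r x, I x -> I (r * x)).

Definition is_prime_ideal (R : comPzRingType) (P : R -> Prop) : Prop :=
  is_ideal P /\ ~ P 1 /\ (forall a b, P (a * b) -> P a \/ P b).

Definition is_maximal_ideal (R : comPzRingType) (P : R -> Prop) : Prop :=
  is_ideal P /\ ~ P 1 /\
  (forall J : R -> Prop, is_ideal J -> (forall x, P x -> J x) ->
     J 1 \/ (forall x, J x -> P x)).

Definition noetherian_ring (R : comPzRingType) : Prop :=
  forall I : nat -> R -> Prop,
    (forall n, is_ideal (I n)) ->
    (forall n x, I n x -> I n.+1 x) ->
    exists n, forall m x, (n <= m)%N -> I m x -> I n x.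

Definition is_submodule (R : comPzRingType) (M : lmodType R) (N : M -> Prop) : Prop :=
  N 0 /\ (forall x y, N x -> N y -> N (x + y)) /\ (forall (r : R) x, N x -> N (r *: x)).

(* p \in Supp_R(N / N') for submodules N' <= N of M.
   By definition p \in Supp(Q) iff Q_p <> 0 iff some element q of Q
   satisfies ann(q) \subseteq p.  For q = x + N' (x \in N),
   ann(q) = {r | r x \in N'}. *)
Definition in_supp_quot (R : comPzRingType) (M : lmodType R)
    (N N' : M -> Prop) (p : R -> Prop) : Prop :=
  is_prime_ideal p /\ exists x, N x /\ (forall r : R, N' (r *: x) -> p r).

Definition in_class_Z (R : comPzRingType) (M : lmodType R) : Prop :=
  forall N : nat -> M -> Prop,
    (forall i, is_submodule (N i)) ->
    (forall i x, N i.+1 x -> N i x) ->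
    exists n, forall i, (n <= i)%N ->
      forall p : R -> Prop, in_supp_quot (N i) (N i.+1) p -> is_maximal_ideal p.

(* Main.v *)
Require Import Defs.
From HB Require Import structures.
From mathcomp Require Import all_boot all_order all_algebra.
From Stdlib Require Import Classical.
Import GRing.Theory.
Local Open Scope ring_scope.

Section Helpers.
Variable R : comPzRingType.

Lemma sm_opp (M : lmodType R) (N : M -> Prop) x : is_submodule N -> N x -> N (- x).
Proof. by move=> [_ [_ hZ]] hx; rewrite -scaleN1r; apply: hZ. Qed.

Lemma sm_sub (M : lmodType R) (N : M -> Prop) x y :
  is_submodule N -> N x -> N y -> N (x - y).
Proof. move=> hN hx hy; case: (hN) => [_ [hD _]]; apply: hD => //; exact: sm_opp. Qed.

Lemma preim_sm (M' M : lmodType R) (f : {linear M' -> M}) (N : M -> Prop) :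
  is_submodule N -> is_submodule (fun x => N (f x)).
Proof.
move=> [h0 [hD hZ]]; split; first by rewrite linear0.
split=> [x y hx hy|r x hx]; first by rewrite linearD; apply: hD.
by rewrite linearZ; apply: hZ.
Qed.

Lemma im_sm (M' M : lmodType R) (f : {linear M' -> M}) (N : M' -> Prop) :
  is_submodule N -> is_submodule (fun y => exists x, N x /\ f x = y).
Proof.
move=> [h0 [hD hZ]]; split; first by exists 0; rewrite linear0.
split=> [x y [a [ha <-]] [b [hb <-]]|r x [a [ha <-]]].
  by exists (a + b); rewrite linearD; split => //; apply: hD.
by exists (r *: a); rewrite linearZ; split => //; apply: hZ.
Qed.
End Helpers.

Theorem proposition2p6 (R : comPzRingType) (hR : noetherian_ring R) :
  (* closed under submodules *)
  (forall (M' M : lmodType R) (f : {linear M' -> M}),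
      injective f -> in_class_Z M -> in_class_Z M') /\
  (* closed under quotient modules *)
  (forall (M M'' : lmodType R) (g : {linear M -> M''}),
      (forall y, exists x, g x = y) -> in_class_Z M -> in_class_Z M'') /\
  (* closed under extensions: 0 -> M' -f-> M -g-> M'' -> 0 exact *)
  (forall (M' M M'' : lmodType R) (f : {linear M' -> M}) (g : {linear M -> M''}),
      injective f -> (forall y, exists x, g x = y) ->
      (forall x, g x = 0 <-> exists x', f x' = x) ->
      in_class_Z M' -> in_class_Z M'' -> in_class_Z M).
Proof.
split.
  move=> M' M f finj HZ N hN hdec.
  have [n Hn] := HZ (fun i y => exists x, N i x /\ f x = y)
    (fun i => @im_sm _ _ _ f _ (hN i))
    (fun i y hy => match hy with ex_intro x (conj hx e) => ex_intro _ x (conj (hdec i x hx) e) end).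
  exists n => i hi p [pp [x [hx hann]]]; apply: (Hn i hi); split => //.
  exists (f x); split; first by exists x.
  move=> r [z [hz e]]; apply: hann; rewrite -linearZ in e.
  by rewrite -(finj _ _ e).
split.
  move=> M M'' g gsurj HZ N hN hdec.
  have [n Hn] := HZ (fun i x => N i (g x)) (fun i => @preim_sm _ _ _ g _ (hN i))
    (fun i x hx => hdec i _ hx).
  exists n => i hi p [pp [y [hy hann]]]; apply: (Hn i hi); split => //.
  have [x ex] := gsurj y; exists x; rewrite ex; split => // r.
  by rewrite linearZ ex; apply: hann.
move=> M' M M'' f g finj gsurj hex HZ' HZ'' N hN hdec.
have [n1 H1] := HZ' (fun i x => N i (f x)) (fun i => @preim_sm _ _ _ f _ (hN i))
    (fun i x hx => hdec i _ hx).
have [n2 H2] := HZ'' (fun i y => exists x, N i x /\ g x = y)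
    (fun i => @im_sm _ _ _ g _ (hN i))
    (fun i y hy => match hy with ex_intro x (conj hx e) => ex_intro _ x (conj (hdec i x hx) e) end).
exists (maxn n1 n2) => i hi p [pp [x [hx hann]]].
have hi1 : (n1 <= i)%N by apply: leq_trans hi; apply: leq_maxl.
have hi2 : (n2 <= i)%N by apply: leq_trans hi; apply: leq_maxr.
case: (classic (forall r, (exists z, N i.+1 z /\ g z = r *: g x) -> p r)) => hc.
  apply: (H2 i hi2); split => //; exists (g x); split => //; by exists x.
have [s hs] := not_all_ex_not _ _ hc.
have [[m [hm em]] nps] := imply_to_and _ _ hs.
have : g (s *: x - m) = 0 by rewrite linearB linearZ em subrr.
move=> /hex [z ez].
apply: (H1 i hi1); split => //; exists z; split.
  rewrite ez; apply: (@sm_sub _ _ (N i) _ _ (hN i)).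
    by case: (hN i) => [_ [_ hZ]]; apply: hZ.
  exact: hdec.
move=> r hr.
have hrs : N i.+1 ((r * s) *: x).
  have -> : (r * s) *: x = f (r *: z) + r *: m.
    by rewrite linearZ /= ez scalerDr scalerN scalerA subrK.
  case: (hN i.+1) => [_ [hD hZ]]; apply: hD => //; exact: hZ.
case: pp => _ [_ hprime].
by case: (hprime _ _ (hann _ hrs)) => // /nps.
Qed.
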